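(* Let $F,H_1,\dots,H_m,G_1,\dots,G_n,F_{i,j}$ ($1\le i\le m$, $1\le j\le n$) be constant real symmetric $p\times p$ matrices and define $\mathcal{B}(\mathbf{x},\mathbf{y})=F+\sum_{i=1}^m x_iH_i+\sum_{j=1}^n y_jG_j+\sum_{i=1}^m\sum_{j=1}^n x_iy_jF_{i,j}$ for $\mathbf{x}\in\mathbb{R}^m,\mathbf{y}\in\mathbb{R}^n$. Let $\Gamma=\tfrac12(F_{i,j})_{i,j}$ be the $mp\times np$ block matrix with $(i,j)$ block $\tfrac12F_{i,j}$, $\Omega_1=(H_1\ \cdots\ H_m)$, $\Omega_2=(G_1\ \cdots\ G_n)$, and $M=\begin{pmatrix}0&\Gamma\\ \Gamma^{\mathsf T}&0\end{pmatrix}\in\mathcal{S}^{(m+n)p}$. Let $M=V^{\mathsf T}DV$ be an eigendecomposition with $V$ orthogonal and $D$ diagonal, let $D^+$ be obtained from $D$ by replacing negative entries with $0$, $D^-=D^+-D$, $M_1=V^{\mathsf T}D^+V$, $M_2=V^{\mathsf T}D^-V$. With $\mathbf{w}=\begin{pmatrix}\mathbf{x}\otimes I\\ \mathbf{y}\otimes I\end{pmatrix}$ ($I$ the $p\times p$ identity, $\mathbf{x},\mathbf{y}$ column vectors), define $\mathcal{B}^+(\mathbf{x},\mathbf{y})=\mathbf{w}^{\mathsf T}M_1\mathbf{w}+(\Omega_1\ \Omega_2)\mathbf{w}+F$ and $\mathcal{B}^-(\mathbf{x},\mathbf{y})=\mathbf{w}^{\mathsf T}M_2\mathbf{w}$.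 Then $\mathcal{B}(\mathbf{x},\mathbf{y})=\mathcal{B}^+(\mathbf{x},\mathbf{y})-\mathcal{B}^-(\mathbf{x},\mathbf{y})$ for all $(\mathbf{x},\mathbf{y})$, and both $\mathcal{B}^+$ and $\mathcal{B}^-$ are psd-convex on $\mathbb{R}^{m+n}$.
   Context: $\mathcal{S}^k$ is the space of real symmetric $k\times k$ matrices; $A\preceq B$ means $B-A$ is positive semidefinite. $\otimes$ is the Kronecker product. A matrix-valued function $\mathcal{C}\colon\mathbb{R}^N\to\mathcal{S}^p$ is psd-convex on a convex set $K$ if $\mathcal{C}(\mu\mathbf{z}_1+(1-\mu)\mathbf{z}_2)\preceq\mu\mathcal{C}(\mathbf{z}_1)+(1-\mu)\mathcal{C}(\mathbf{z}_2)$ for all $\mathbf{z}_1,\mathbf{z}_2\in K$, $\mu\in(0,1)$. *)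

(* Defs.v *)
From HB Require Import structures.
From mathcomp Require Import all_boot all_order all_algebra.
From mathcomp.real_closed Require Export mxtens.
Set Implicit Arguments. Unset Strict Implicit. Unset Printing Implicit Defensive.
Import Order.TTheory GRing.Theory Num.Theory.
Local Open Scope ring_scope.

(* Kronecker product: mxtens.tensmx, (A *t B) (i*p+k, j*q+l) = A i j * B k l. *)

Definition psd (R : realFieldType) (k : nat) (A : 'M[R]_k) : Prop :=
  A^T = A /\ forall v : 'cV[R]_k, 0 <= (v^T *m A *m v) 0 0.

Definition loewner_le (R : realFieldType) (k : nat) (A B : 'M[R]_k) : Prop :=
  psd (B - A).

Definition psd_convex_on (R : realFieldType) (N p : nat)
  (K : 'cV[R]_N -> Prop) (C : 'cV[R]_N -> 'M[R]_p) : Prop :=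
  forall z1 z2 : 'cV[R]_N, K z1 -> K z2 -> forall mu : R, 0 < mu -> mu < 1 ->
    loewner_le (C (mu *: z1 + (1 - mu) *: z2)) (mu *: C z1 + (1 - mu) *: C z2).

Section Construction.
Variables (R : realFieldType) (m n p : nat).

Definition Bfun (F : 'M[R]_p) (H : 'I_m -> 'M[R]_p) (G : 'I_n -> 'M[R]_p)
  (Fij : 'I_m -> 'I_n -> 'M[R]_p) (x : 'cV[R]_m) (y : 'cV[R]_n) : 'M[R]_p :=
  F + \sum_(i < m) x i 0 *: H i + \sum_(j < n) y j 0 *: G j
    + \sum_(i < m) \sum_(j < n) (x i 0 * y j 0) *: Fij i j.

Definition Gamma (Fij : 'I_m -> 'I_n -> 'M[R]_p) : 'M[R]_(m * p, n * p) :=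
  \sum_(i < m) \sum_(j < n) tensmx (delta_mx i j : 'M[R]_(m, n)) ((2%:R)^-1 *: Fij i j).

Definition Omega1 (H : 'I_m -> 'M[R]_p) : 'M[R]_(1 * p, m * p) :=
  \sum_(i < m) tensmx (delta_mx 0 i : 'M[R]_(1, m)) (H i).
Definition Omega2 (G : 'I_n -> 'M[R]_p) : 'M[R]_(1 * p, n * p) :=
  \sum_(j < n) tensmx (delta_mx 0 j : 'M[R]_(1, n)) (G j).

Definition Mmat (Fij : 'I_m -> 'I_n -> 'M[R]_p) : 'M[R]_(m * p + n * p) :=
  block_mx 0 (Gamma Fij) (Gamma Fij)^T 0.

Definition wvec (x : 'cV[R]_m) (y : 'cV[R]_n) : 'M[R]_(m * p + n * p, 1 * p) :=
  col_mx (tensmx x (1%:M : 'M[R]_p)) (tensmx y (1%:M : 'M[R]_p)).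

End Construction.

Definition posPart (R : realFieldType) (k : nat) (D : 'M[R]_k) : 'M[R]_k :=
  \matrix_(i, j) Num.max (D i j) 0.

(* Main.v *)
Require Import Defs.
From HB Require Import structures.
From mathcomp Require Import all_boot all_order all_algebra.
From mathcomp.real_closed Require Import mxtens.
From mathcomp Require Import ring lra.
Import Order.TTheory GRing.Theory Num.Theory.
Local Open Scope ring_scope.

Set Implicit Arguments. Unset Strict Implicit. Unset Printing Implicit Defensive.
Section Aux.
Variable R : realFieldType.

Lemma castD a b c d (e : (a = b) * (c = d)) (A B : 'M[R]_(a, c)) :
  castmx e (A + B) = castmx e A + castmx e B.
Proof. by apply/matrixP=> i j; rewrite !(castmxE, mxE). Qed.

Lemma castN a b c d (e : (a = b) * (c = d)) (A : 'M[R]_(a, c)) :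
  castmx e (- A) = - castmx e A.
Proof. by apply/matrixP=> i j; rewrite !(castmxE, mxE). Qed.

Lemma castZ a b c d (e : (a = b) * (c = d)) (k : R) (A : 'M[R]_(a, c)) :
  castmx e (k *: A) = k *: castmx e A.
Proof. by apply/matrixP=> i j; rewrite !(castmxE, mxE). Qed.

Lemma cast0 a b c d (e : (a = b) * (c = d)) :
  castmx e (0 : 'M[R]_(a, c)) = 0.
Proof. by apply/matrixP=> i j; rewrite !(castmxE, mxE). Qed.

Lemma castsum a b c d (e : (a = b) * (c = d)) I (r : seq I) P (f : I -> 'M[R]_(a, c)) :
  castmx e (\sum_(i <- r | P i) f i) = \sum_(i <- r | P i) castmx e (f i).
Proof.
apply: (big_ind2 (fun x y => castmx e x = y)) => //; first exact: cast0.
by move=> x1 x2 y1 y2 <- <-; rewrite castD.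
Qed.

Lemma casttr a b (e : (a = b) * (a = b)) (A : 'M[R]_a) :
  castmx e (A^T) = (castmx e A)^T.
Proof. by rewrite trmx_cast; apply: eq_castmx. Qed.

Lemma psd_cast a b (e : (a = b) * (a = b)) (A : 'M[R]_a) :
  psd A -> psd (castmx e A).
Proof.
case: e => e1 e2; case: b / e1 e2 => e2.
by rewrite castmx_id.
Qed.

Lemma psd_scale k (c : R) (A : 'M[R]_k) : 0 <= c -> psd A -> psd (c *: A).
Proof.
move=> hc [hs hv]; split; first by rewrite linearZ /= hs.
move=> v; rewrite -scalemxAr -scalemxAl mxE; exact: mulr_ge0.
Qed.

Lemma psd_quad k q (P : 'M[R]_k) (d : 'M[R]_(k, q)) :
  psd P -> psd (d^T *m P *m d).
Proof.
move=> [hs hv]; split; first by rewrite !trmx_mul trmxK hs mulmxA.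
move=> v; have := hv (d *m v).
by rewrite trmx_mul !mulmxA.
Qed.

End Aux.

Section Aux2.
Variable R : realFieldType.

Definition Qf k q (P : 'M[R]_k) (u v : 'M[R]_(k, q)) := u^T *m P *m v.

Lemma QfDl k q P (u1 u2 v : 'M[R]_(k, q)) : Qf P (u1 + u2) v = Qf P u1 v + Qf P u2 v.
Proof. by rewrite /Qf linearD /= !mulmxDl. Qed.
Lemma QfDr k q P (u v1 v2 : 'M[R]_(k, q)) : Qf P u (v1 + v2) = Qf P u v1 + Qf P u v2.
Proof. by rewrite /Qf mulmxDr. Qed.
Lemma QfZl k q P c (u v : 'M[R]_(k, q)) : Qf P (c *: u) v = c *: Qf P u v.
Proof. by rewrite /Qf linearZ /= -!scalemxAl. Qed.
Lemma QfZr k q P c (u v : 'M[R]_(k, q)) : Qf P u (c *: v) = c *: Qf P u v.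
Proof. by rewrite /Qf -!scalemxAr. Qed.
Lemma QfNl k q P (u v : 'M[R]_(k, q)) : Qf P (- u) v = - Qf P u v.
Proof. by rewrite -scaleN1r QfZl scaleN1r. Qed.
Lemma QfNr k q P (u v : 'M[R]_(k, q)) : Qf P u (- v) = - Qf P u v.
Proof. by rewrite -scaleN1r QfZr scaleN1r. Qed.

Lemma Qf_key k q P (a b : 'M[R]_(k, q)) t :
  t *: Qf P a a + (1 - t) *: Qf P b b
    - Qf P (t *: a + (1 - t) *: b) (t *: a + (1 - t) *: b)
  = (t * (1 - t)) *: Qf P (a - b) (a - b).
Proof.
rewrite !(QfDl, QfDr, QfZl, QfZr, QfNl, QfNr).
move: (Qf P a a) (Qf P a b) (Qf P b a) (Qf P b b) => X1 X2 X3 X4.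
apply/matrixP=> i j; rewrite !mxE; ring.
Qed.

Lemma tensDl m n p q (A B : 'M[R]_(m, n)) (C : 'M[R]_(p, q)) :
  (A + B) *t C = A *t C + B *t C.
Proof. by apply/matrixP=> i j; rewrite !mxE mulrDl. Qed.
Lemma tensZl m n p q c (A : 'M[R]_(m, n)) (C : 'M[R]_(p, q)) :
  (c *: A) *t C = c *: (A *t C).
Proof. by apply/matrixP=> i j; rewrite !mxE mulrA. Qed.

Lemma cast_tens1 p (a : 'M[R]_1) (A : 'M[R]_p) :
  castmx (mul1n p, mul1n p) (a *t A) = a 0 0 *: A.
Proof.
by rewrite {1}[a]mx11_scalar tens_scalar_mx castmx_comp castmx_id.
Qed.

End Aux2.

Section Aux3.
Variable R : realFieldType.

Lemma psd_diag k (e : 'rV[R]_k) : (forall j, 0 <= e 0 j) -> psd (diag_mx e).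
Proof.
move=> he; split; first by rewrite tr_diag_mx.
move=> v; rewrite mul_mx_diag mxE; apply: sumr_ge0 => j _.
rewrite !mxE -mulrA [e 0 j * _]mulrC mulrA; apply: mulr_ge0 => //.
by rewrite -expr2 sqr_ge0.
Qed.

Lemma psd_Dm k (D : 'M[R]_k) : is_diag_mx D -> psd (posPart D - D).
Proof.
case/diag_mxP => d ->.
have -> : posPart (diag_mx d) - diag_mx d =
          diag_mx (\row_j (Num.max (d 0 j) 0 - d 0 j)).
  apply/matrixP=> i j; rewrite !mxE.
  case: eqP => [->|_]; rewrite ?mulr1n ?mulr0n //.
  by rewrite /Num.max ltxx subr0.
apply: psd_diag => j; rewrite mxE subr_ge0; by rewrite le_max lexx.
Qed.

Lemma psd_Dp k (D : 'M[R]_k) : is_diag_mx D -> psd (posPart D).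
Proof.
case/diag_mxP => d ->.
have -> : posPart (diag_mx d) = diag_mx (\row_j (Num.max (d 0 j) 0)).
  apply/matrixP=> i j; rewrite !mxE.
  case: eqP => [->|_]; rewrite ?mulr1n ?mulr0n //.
  by rewrite /Num.max ltxx.
apply: psd_diag => j; rewrite mxE; by rewrite le_max lexx orbT.
Qed.

Lemma cvx_gen N k p (P : 'M[R]_k) (hP : psd P)
  (Kf : 'M[R]_(k, 1 * p) -> 'M[R]_(1 * p))
  (hK : forall a b t, Kf (t *: a + (1 - t) *: b) = t *: Kf a + (1 - t) *: Kf b)
  (F0 : 'M[R]_p) (L : 'cV[R]_N -> 'M[R]_(k, 1 * p))
  (hL : forall a b t, L (t *: a + (1 - t) *: b) = t *: L a + (1 - t) *: L b)
  (C : 'cV[R]_N -> 'M[R]_p)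
  (hC : forall z, C z = castmx (mul1n p, mul1n p) (Qf P (L z) (L z) + Kf (L z)) + F0) :
  psd_convex_on (fun _ => True) C.
Proof.
move=> z1 z2 _ _ t t0 t1; rewrite /loewner_le !hC hL hK.
have -> : forall (A1 A2 A3 K1 K2 : 'M[R]_(1 * p)),
  t *: (castmx (mul1n p, mul1n p) (A1 + K1) + F0) +
  (1 - t) *: (castmx (mul1n p, mul1n p) (A2 + K2) + F0) -
  (castmx (mul1n p, mul1n p) (A3 + (t *: K1 + (1 - t) *: K2)) + F0) =
  castmx (mul1n p, mul1n p) (t *: A1 + (1 - t) *: A2 - A3).
  move=> A1 A2 A3 K1 K2; apply/matrixP=> i j; rewrite !(castmxE, mxE); ring.
rewrite Qf_key; apply: psd_cast; apply: psd_scale.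
  by apply: mulr_ge0; lra.
exact: psd_quad.
Qed.

End Aux3.

Section Aux4.
Variable R : realFieldType.

Lemma delta_quad m n (x : 'cV[R]_m) (y : 'cV[R]_n) i j :
  (x^T *m delta_mx i j *m y) 0 0 = x i 0 * y j 0.
Proof.
rewrite -(mul_delta_mx (0 : 'I_1)) mulmxA -colE -mulmxA -rowE.
by rewrite mxE big_ord1 !mxE.
Qed.

Lemma Omega_w m p (x : 'cV[R]_m) (H : 'I_m -> 'M[R]_p) :
  castmx (mul1n p, mul1n p) (Omega1 H *m (x *t (1%:M : 'M[R]_p)))
  = \sum_(i < m) x i 0 *: H i.
Proof.
rewrite /Omega1 mulmx_suml castsum; apply: eq_bigr => i _.
by rewrite tensmx_mul cast_tens1 mulmx1 -rowE mxE.
Qed.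

Lemma Omega2_w m p (x : 'cV[R]_m) (H : 'I_m -> 'M[R]_p) :
  castmx (mul1n p, mul1n p) (Omega2 H *m (x *t (1%:M : 'M[R]_p)))
  = \sum_(i < m) x i 0 *: H i.
Proof. exact: Omega_w. Qed.

Lemma Gamma_w m n p (x : 'cV[R]_m) (y : 'cV[R]_n) (Fij : 'I_m -> 'I_n -> 'M[R]_p) :
  castmx (mul1n p, mul1n p)
    ((x *t (1%:M : 'M[R]_p))^T *m Gamma Fij *m (y *t (1%:M : 'M[R]_p)))
  = \sum_(i < m) \sum_(j < n) (x i 0 * y j 0) *: (2^-1 *: Fij i j).
Proof.
rewrite /Gamma mulmx_sumr mulmx_suml castsum; apply: eq_bigr => i _.
rewrite mulmx_sumr mulmx_suml castsum; apply: eq_bigr => j _.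
rewrite trmx_tens !tensmx_mul cast_tens1 trmx1 mul1mx mulmx1.
by rewrite delta_quad.
Qed.

End Aux4.

Unset Implicit Arguments. Set Strict Implicit.

Theorem theorem7 (R : realFieldType) (m n p : nat)
  (F : 'M[R]_p) (H : 'I_m -> 'M[R]_p) (G : 'I_n -> 'M[R]_p)
  (Fij : 'I_m -> 'I_n -> 'M[R]_p)
  (hF : F^T = F) (hH : forall i, (H i)^T = H i) (hG : forall j, (G j)^T = G j)
  (hFij : forall i j, (Fij i j)^T = Fij i j)
  (V D : 'M[R]_(m * p + n * p))
  (hV : V^T *m V = 1%:M) (hD : is_diag_mx D)
  (hM : Mmat Fij = V^T *m D *m V) :
  let Dp := posPart D in
  let Dm := Dp - D in
  let M1 := V^T *m Dp *m V in
  let M2 := V^T *m Dm *m V in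
  let Bp := fun (x : 'cV[R]_m) (y : 'cV[R]_n) =>
    castmx (mul1n p, mul1n p)
      ((wvec p x y)^T *m M1 *m wvec p x y
       + row_mx (Omega1 H) (Omega2 G) *m wvec p x y) + F in
  let Bm := fun (x : 'cV[R]_m) (y : 'cV[R]_n) =>
    castmx (mul1n p, mul1n p) ((wvec p x y)^T *m M2 *m wvec p x y) in
  (forall (x : 'cV[R]_m) (y : 'cV[R]_n), Bfun F H G Fij x y = Bp x y - Bm x y) /\
  psd_convex_on (fun _ => True) (fun z : 'cV[R]_(m + n) => Bp (usubmx z) (dsubmx z)) /\
  psd_convex_on (fun _ => True) (fun z : 'cV[R]_(m + n) => Bm (usubmx z) (dsubmx z)).
Proof.
move=> Dp Dm M1 M2 Bp Bm.
have hM1 : M1 = Mmat Fij + M2.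
  by rewrite hM /M1 /M2 /Dm -mulmxDl -mulmxDr addrC subrK.
have psdM2 : psd M2 by apply: psd_quad; apply: psd_Dm.
have psdM1 : psd M1 by apply: psd_quad; apply: psd_Dp.
have hL : forall (a b : 'cV[R]_(m + n)) t,
  wvec p (usubmx (t *: a + (1 - t) *: b)) (dsubmx (t *: a + (1 - t) *: b)) =
  t *: wvec p (usubmx a) (dsubmx a) + (1 - t) *: wvec p (usubmx b) (dsubmx b).
  move=> a b t; rewrite /wvec !linearD !linearZ /= !tensDl !tensZl.
  by rewrite !scale_col_mx add_col_mx.
split.
  move=> x y; rewrite /Bp /Bm hM1 mulmxDr mulmxDl castD castD.
  rewrite /wvec tr_col_mx /Mmat mul_row_block !mulmx0 add0r addr0 mul_row_col.
  have eT : forall (A : 'M[R]_(m * p, 1 * p)) (B : 'M[R]_(n * p, 1 * p)) (Gm : 'M[R]_(m * p, n * p)),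
    B^T *m Gm^T *m A = (A^T *m Gm *m B)^T by move=> A B Gm; rewrite !trmx_mul trmxK mulmxA.
  rewrite castD eT casttr Gamma_w.
  rewrite mul_row_col castD Omega_w Omega2_w /Bfun.
  have h2 : (2^-1 + 2^-1 : R) = 1.
    by rewrite [X in _ = X](splitr 1) !div1r.
  rewrite linear_sum -big_split /=.
  have hS : forall i : 'I_m,
    (\sum_(j < n) (x i 0 * y j 0) *: (2^-1 *: Fij i j))^T +
      \sum_(j < n) (x i 0 * y j 0) *: (2^-1 *: Fij i j) =
    \sum_(j < n) (x i 0 * y j 0) *: Fij i j.
    move=> i; rewrite linear_sum -big_split /=; apply: eq_bigr => j _.
    rewrite !linearZ /= hFij !scalerA [2^-1 * _]mulrC -scalerDl -mulrDr h2 mulr1.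
    done.
  rewrite (eq_bigr _ (fun i _ => hS i)).
  move: (\sum_(i < m) _) (\sum_(i < m) _) (\sum_(j < n) _) (castmx _ _) => S1 S2 S3 X.
  by apply/matrixP=> i j; rewrite !mxE; ring.
split.
  apply: (@cvx_gen R (m + n) _ p M1 psdM1 (fun u => row_mx (Omega1 H) (Omega2 G) *m u) _ F
            (fun z => wvec p (usubmx z) (dsubmx z)) hL) => //.
  by move=> a b t; rewrite mulmxDr -!scalemxAr.
apply: (@cvx_gen R (m + n) _ p M2 psdM2 (fun _ => 0) _ 0
          (fun z => wvec p (usubmx z) (dsubmx z)) hL) => //.
  by move=> a b t; rewrite !scaler0 addr0.
by move=> z; rewrite !addr0.
Qed.
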